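(* Assume Hypotheses 1, 2 and 3 (see context). For each $x\in\Gamma$, the set $T(x)$ is a linear subspace of $X$.
   Context: System $\dot x=F(x)$ with $F=(f,g)$, i.e. $\dot a=f(a,z)$, $\dot z=g(a,z)$, $(a,z)\in\mathbb{R}^n\times\mathbb{R}^m$, $X=\mathbb{R}^n\times\mathbb{R}^m$, flow $\Phi(t,x)$. Euclidean inner product, norm, operator norm. $\mathcal{L}(x_1,x_2)=\|a_2-a_1\|^2-\|z_2-z_1\|^2$, $\mathcal{C}(x)=\{x'\in X:\mathcal{L}(x',x)\ge0\}$, $\mathbf{0}$ the zero vector of $X$; $\Pi(a,z)=a$, $\Pi_\perp(a,z)=z$; $\mathbb{B}_d(x)=\{(a',z'):\|a'-a\|\le d,\|z'-z\|\le d\}$. $\Gamma\subseteq U$ positively invariant means $\Phi(t,x)$ is defined for all $t\ge0$ for $x\in\Gamma$ and $\Phi(t,\Gamma)\subseteq\Gamma$. Hypothesis 1: $U$ open and convex, and there is $d>0$ with $\mathcal{C}(x)\cap U\subset\mathbb{B}_d(x)$ for all $x\in U$. Hypothesis 2: $f,g$ are $C^1$ on $U$; there exist continuous $\alpha>0$, $\ell\ge0$ on $U$ and $c_1>0$ with, for all $x\in U$: $\langle a',D_af(x)a'\rangle\ge\alpha(x)\|a'\|^2$; $\langle z',D_zg(x)z'\rangle\le\ell(x)\|z'\|^2$; $\alpha(x)\ge\ell(x)+\|D_zf(x)\|+\|D_ag(x)\|+c_1$. Hypothesis 3: $\Gamma\subset U$ is positively invariant and $\Pi_\perp(\Gamma)=\Pi_\perp(U)$.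 For $x\in\Gamma$, $Q(t,x)$ ($t\ge0$) denotes the fundamental matrix solution of the variational equation $\dot{\mathbf{x}}=DF(\Phi(t,x))\mathbf{x}$ with $Q(0,x)=I$. For $x\in\Gamma$, $T(x):=\{\mathbf{x}\in X: \mathcal{L}(Q(t,x)\mathbf{x},\mathbf{0})\le0\text{ for all }t\ge0\}$. *)

(* Defs.v *)
From Stdlib Require Import Reals ClassicalEpsilon.
From mathcomp Require Import ssreflect ssrfun ssrbool eqtype ssrnat fintype bigop.

Set Implicit Arguments.
Unset Strict Implicit.

Local Open Scope R_scope.

Definition vec (k : nat) := 'I_k -> R.
Definition vzero (k : nat) : vec k := fun _ => 0.
Definition vadd k (u v : vec k) : vec k := fun i => u i + v i.
Definition vsub k (u v : vec k) : vec k := fun i => u i - v i.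
Definition vscale k (c : R) (u : vec k) : vec k := fun i => c * u i.
Definition dot k (u v : vec k) : R := \big[Rplus/0]_(i < k) (u i * v i).
Definition vnorm k (u : vec k) : R := sqrt (dot u u).

Definition mat (l k : nat) := 'I_l -> 'I_k -> R.
Definition mapp l k (A : mat l k) (v : vec k) : vec l :=
  fun i => \big[Rplus/0]_(j < k) (A i j * v j).
Definition opnorm l k (A : mat l k) : R :=
  epsilon (inhabits 0)
    (is_lub (fun y => exists v : vec k, vnorm v <= 1 /\ y = vnorm (mapp A v))).

Definition X (n m : nat) := (vec n * vec m)%type.
Definition xzero n m : X n m := (@vzero n, @vzero m).
Definition xadd n m (x y : X n m) : X n m := (vadd x.1 y.1, vadd x.2 y.2).
Definition xsub n m (x y : X n m) : X n m := (vsub x.1 y.1, vsub x.2 y.2).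
Definition xscale n m (c : R) (x : X n m) : X n m := (vscale c x.1, vscale c x.2).
Definition xnorm n m (x : X n m) : R := sqrt (dot x.1 x.1 + dot x.2 x.2).
Definition Pi n m (x : X n m) : vec n := x.1.
Definition Pi_perp n m (x : X n m) : vec m := x.2.

Definition Lfun n m (x1 x2 : X n m) : R :=
  (vnorm (vsub x2.1 x1.1))^2 - (vnorm (vsub x2.2 x1.2))^2.
Definition Ccone n m (x : X n m) : X n m -> Prop := fun x' => Lfun x' x >= 0.
Definition Bbox n m (d : R) (x : X n m) : X n m -> Prop :=
  fun x' => vnorm (vsub x'.1 x.1) <= d /\ vnorm (vsub x'.2 x.2) <= d.

Definition is_open n m (U : X n m -> Prop) : Prop :=
  forall x, U x -> exists r, 0 < r /\ forall y, xnorm (xsub y x) < r -> U y.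
Definition is_convex n m (U : X n m -> Prop) : Prop :=
  forall x y, U x -> U y -> forall t, 0 <= t <= 1 ->
    U (xadd (xscale (1 - t) x) (xscale t y)).

Definition cont_on n m (U : X n m -> Prop) (phi : X n m -> R) : Prop :=
  forall x, U x -> forall eps, 0 < eps -> exists delta, 0 < delta /\
    forall y, U y -> xnorm (xsub y x) < delta -> Rabs (phi y - phi x) < eps.

Definition Fvf n m (f : vec n -> vec m -> vec n) (g : vec n -> vec m -> vec m)
  (x : X n m) : X n m := (f x.1 x.2, g x.1 x.2).

Definition DFapp n m (Daf : X n m -> mat n n) (Dzf : X n m -> mat n m)
  (Dag : X n m -> mat m n) (Dzg : X n m -> mat m m) (y h : X n m) : X n m :=
  (vadd (mapp (Daf y) h.1) (mapp (Dzf y) h.2),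
   vadd (mapp (Dag y) h.1) (mapp (Dzg y) h.2)).

(* f, g are C^1 on U, with partial Jacobians D_a f, D_z f, D_a g, D_z g:
   F is Frechet differentiable at every point of U with derivative given by the
   block matrix, and all entries of the blocks are continuous on U. *)
Definition C1_with_derivs n m (U : X n m -> Prop)
  (f : vec n -> vec m -> vec n) (g : vec n -> vec m -> vec m)
  (Daf : X n m -> mat n n) (Dzf : X n m -> mat n m)
  (Dag : X n m -> mat m n) (Dzg : X n m -> mat m m) : Prop :=
  (forall x, U x -> forall eps, 0 < eps -> exists delta, 0 < delta /\
     forall h, xnorm h < delta ->
       xnorm (xsub (xsub (Fvf f g (xadd x h)) (Fvf f g x))
                   (DFapp Daf Dzf Dag Dzg x h)) <= eps * xnorm h) /\
  (forall i j, cont_on U (fun y => Daf y i j)) /\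
  (forall i j, cont_on U (fun y => Dzf y i j)) /\
  (forall i j, cont_on U (fun y => Dag y i j)) /\
  (forall i j, cont_on U (fun y => Dzg y i j)).

Definition Hyp1 n m (U : X n m -> Prop) : Prop :=
  is_open U /\ is_convex U /\
  exists d, 0 < d /\ forall x, U x -> forall x', Ccone x x' -> U x' -> Bbox d x x'.

Definition Hyp2 n m (U : X n m -> Prop)
  (f : vec n -> vec m -> vec n) (g : vec n -> vec m -> vec m)
  (Daf : X n m -> mat n n) (Dzf : X n m -> mat n m)
  (Dag : X n m -> mat m n) (Dzg : X n m -> mat m m)
  (alpha ell : X n m -> R) (c1 : R) : Prop :=
  C1_with_derivs U f g Daf Dzf Dag Dzg /\
  cont_on U alpha /\ cont_on U ell /\ 0 < c1 /\
  (forall x, U x -> 0 < alpha x /\ 0 <= ell x) /\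
  (forall x, U x -> forall a' : vec n,
      dot a' (mapp (Daf x) a') >= alpha x * (vnorm a')^2) /\
  (forall x, U x -> forall z' : vec m,
      dot z' (mapp (Dzg x) z') <= ell x * (vnorm z')^2) /\
  (forall x, U x ->
      alpha x >= ell x + opnorm (Dzf x) + opnorm (Dag x) + c1).

Definition is_forward_flow n m (Gamma : X n m -> Prop)
  (f : vec n -> vec m -> vec n) (g : vec n -> vec m -> vec m)
  (Phi : R -> X n m -> X n m) : Prop :=
  forall x, Gamma x ->
    Phi 0 x = x /\
    (forall eps, 0 < eps -> exists delta, 0 < delta /\
        forall s, 0 <= s < delta -> xnorm (xsub (Phi s x) x) < eps) /\
    (forall t, 0 < t ->
       (forall i, derivable_pt_lim (fun s => (Phi s x).1 i) t
                    (f (Phi t x).1 (Phi t x).2 i)) /\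
       (forall j, derivable_pt_lim (fun s => (Phi s x).2 j) t
                    (g (Phi t x).1 (Phi t x).2 j))).

Definition Hyp3 n m (U Gamma : X n m -> Prop)
  (f : vec n -> vec m -> vec n) (g : vec n -> vec m -> vec m)
  (Phi : R -> X n m -> X n m) : Prop :=
  (forall x, Gamma x -> U x) /\
  is_forward_flow Gamma f g Phi /\
  (forall x, Gamma x -> forall t, 0 <= t -> Gamma (Phi t x)) /\
  (forall z : vec m, (exists x, U x /\ Pi_perp x = z) <->
                     (exists x, Gamma x /\ Pi_perp x = z)).

Definition is_linear_map n m (A : X n m -> X n m) : Prop :=
  (forall u v, A (xadd u v) = xadd (A u) (A v)) /\
  (forall c u, A (xscale c u) = xscale c (A u)).

(* Q(t,x) (t >= 0, x in Gamma) is the fundamental matrix solution of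
   d/dt Q = DF(Phi(t,x)) Q, Q(0) = I: for t >= 0, Q(t,x) is linear, Q(0,x) = id,
   and for every initial vector v, t |-> Q(t,x) v is right-continuous at 0 and
   solves the variational equation on (0, +oo). *)
Definition is_fundamental_matrix n m (Gamma : X n m -> Prop)
  (Daf : X n m -> mat n n) (Dzf : X n m -> mat n m)
  (Dag : X n m -> mat m n) (Dzg : X n m -> mat m m)
  (Phi : R -> X n m -> X n m) (Q : R -> X n m -> X n m -> X n m) : Prop :=
  forall x, Gamma x ->
    (forall t, 0 <= t -> is_linear_map (Q t x)) /\
    (forall v, Q 0 x v = v) /\
    (forall v,
       (forall eps, 0 < eps -> exists delta, 0 < delta /\
          forall s, 0 <= s < delta -> xnorm (xsub (Q s x v) v) < eps) /\
       (forall t, 0 < t ->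
          (forall i, derivable_pt_lim (fun s => (Q s x v).1 i) t
                       ((DFapp Daf Dzf Dag Dzg (Phi t x) (Q t x v)).1 i)) /\
          (forall j, derivable_pt_lim (fun s => (Q s x v).2 j) t
                       ((DFapp Daf Dzf Dag Dzg (Phi t x) (Q t x v)).2 j)))).

Definition Tset n m (Q : R -> X n m -> X n m -> X n m) (x : X n m) : X n m -> Prop :=
  fun v => forall t, 0 <= t -> Lfun (Q t x v) (xzero n m) <= 0.

Definition is_subspace n m (S : X n m -> Prop) : Prop :=
  S (xzero n m) /\
  (forall u v, S u -> S v -> S (xadd u v)) /\
  (forall c u, S u -> S (xscale c u)).

(* Main.v *)
Require Import Defs.
From Stdlib Require Import Reals Lra Psatz Classical ClassicalEpsilon FunctionalExtensionality.
From mathcomp Require Import ssreflect ssrfun ssrbool eqtype ssrnat fintype seq bigop.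
Local Open Scope R_scope.


Section Sums.
Variable I : Type.
Lemma bsum_add (r : seq I) (F G : I -> R) :
  \big[Rplus/0]_(i <- r) (F i + G i) = \big[Rplus/0]_(i <- r) F i + \big[Rplus/0]_(i <- r) G i.
Proof. elim: r => [|a r IH]; rewrite ?big_nil ?big_cons; [lra| rewrite IH; lra]. Qed.
Lemma bsum_scal (r : seq I) c (F : I -> R) :
  \big[Rplus/0]_(i <- r) (c * F i) = c * \big[Rplus/0]_(i <- r) F i.
Proof. elim: r => [|a r IH]; rewrite ?big_nil ?big_cons; [lra| rewrite IH; lra]. Qed.
Lemma bsum_le (r : seq I) (F G : I -> R) :
  (forall i, F i <= G i) -> \big[Rplus/0]_(i <- r) F i <= \big[Rplus/0]_(i <- r) G i.
Proof. move=> H; elim: r => [|a r IH]; rewrite ?big_nil ?big_cons; [lra| have := H a; lra]. Qed.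
Lemma bsum_deriv (r : seq I) (F : I -> R -> R) (F' : I -> R) t :
  (forall i, derivable_pt_lim (F i) t (F' i)) ->
  derivable_pt_lim (fun s => \big[Rplus/0]_(i <- r) F i s) t (\big[Rplus/0]_(i <- r) F' i).
Proof.
move=> H; elim: r => [|a r IH].
  rewrite big_nil. have -> : (fun s => \big[Rplus/0]_(i <- [::]) F i s) = fun _ => 0.
    by apply: functional_extensionality => s; rewrite big_nil.
  exact: derivable_pt_lim_const.
rewrite big_cons. have -> : (fun s => \big[Rplus/0]_(i <- a :: r) F i s) =
   (fun s => F a s + \big[Rplus/0]_(i <- r) F i s).
  by apply: functional_extensionality => s; rewrite big_cons.
exact: derivable_pt_lim_plus.
Qed.
End Sums.

Lemma dot_add_r k (u v w : vec k) : dot u (vadd v w) = dot u v + dot u w.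
Proof. rewrite /dot /vadd -bsum_add. apply: eq_bigr => i _; ring. Qed.
Lemma bsum_nonneg (I : Type) (r : seq I) (F : I -> R) :
  (forall i, 0 <= F i) -> 0 <= \big[Rplus/0]_(i <- r) F i.
Proof. move=> H; elim: r => [|a r IH]; rewrite ?big_nil ?big_cons; [lra| have := H a; lra]. Qed.

Set Implicit Arguments.

Lemma dot_add_l k (u v w : vec k) : dot (vadd u v) w = dot u w + dot v w.
Proof. rewrite /dot /vadd -bsum_add. apply: eq_bigr => i _; ring. Qed.
Lemma dot_scal_r k c (u v : vec k) : dot u (vscale c v) = c * dot u v.
Proof. rewrite /dot /vscale -bsum_scal. apply: eq_bigr => i _; ring. Qed.
Lemma dot_scal_l k c (u v : vec k) : dot (vscale c u) v = c * dot u v.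
Proof. rewrite /dot /vscale -bsum_scal. apply: eq_bigr => i _; ring. Qed.
Lemma dot_sym k (u v : vec k) : dot u v = dot v u.
Proof. rewrite /dot. apply: eq_bigr => i _; ring. Qed.
Lemma dot_nonneg k (u : vec k) : 0 <= dot u u.
Proof.
rewrite /dot. apply: bsum_nonneg => i. nra.
Qed.
Lemma vnorm_sq k (u : vec k) : vnorm u ^ 2 = dot u u.
Proof. rewrite /vnorm. apply: pow2_sqrt. exact: dot_nonneg. Qed.
Lemma vnorm_ge0 k (u : vec k) : 0 <= vnorm u.
Proof. exact: sqrt_pos. Qed.

Lemma real_cs D A B : 0 <= A -> 0 <= B ->
  (forall s, 0 < s -> 2 * D <= s * A + B / s) -> D <= sqrt A * sqrt B.
Proof.
move=> HA HB H.
have HAB : 0 <= sqrt A * sqrt B by apply: Rmult_le_pos; apply: sqrt_pos.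
destruct (Rle_or_lt D 0) as [HD|HD]; first lra.
destruct (Req_dec A 0) as [A0|An0].
  exfalso. have Hs : 0 < (B + 1) / D by apply: Rdiv_lt_0_compat; lra.
  have := H _ Hs. rewrite A0. unfold Rdiv. rewrite Rinv_mult Rinv_inv.
  move=> H1. have : B * (/ (B+1) * D) < 2 * D.
    have : B * / (B+1) < 1. apply/(Rmult_lt_reg_r (B+1)); first lra.
      rewrite Rmult_assoc Rinv_l; lra.
    nra.
  lra.
destruct (Req_dec B 0) as [B0|Bn0].
  exfalso. have Hs : 0 < D / (A + 1) by apply: Rdiv_lt_0_compat; lra.
  have := H _ Hs. rewrite B0. have Hc : D / (A + 1) * A < D.
    unfold Rdiv. have : / (A+1) * A < 1. rewrite Rmult_comm. apply/(Rmult_lt_reg_r (A+1)); first lra.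
      rewrite Rmult_assoc Rinv_l; lra.
    nra.
  unfold Rdiv at 2. lra.
have sA : 0 < sqrt A by apply: sqrt_lt_R0; lra.
have sB : 0 < sqrt B by apply: sqrt_lt_R0; lra.
have Hs : 0 < sqrt B / sqrt A by apply: Rdiv_lt_0_compat.
have := H _ Hs.
have -> : sqrt B / sqrt A * A = sqrt A * sqrt B.
  rewrite -{2}(sqrt_sqrt A) //. field. lra.
have -> : B / (sqrt B / sqrt A) = sqrt A * sqrt B.
  rewrite -{1}(sqrt_sqrt B) //. field. lra.
lra.
Qed.

Lemma cs k (u v : vec k) : dot u v <= vnorm u * vnorm v.
Proof.
apply: real_cs; try apply: dot_nonneg.
move=> s Hs. rewrite /Rdiv (Rmult_comm _ (/s)) /dot -!bsum_scal -bsum_add. apply: bsum_le => i.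
have : 0 <= (s * u i - v i) ^ 2 by apply: pow2_ge_0.
move=> H. apply/(Rmult_le_reg_r s) => //. rewrite Rmult_plus_distr_r.
have -> : / s * (v i * v i) * s = v i * v i by field; lra.
nra.
Qed.

Lemma cs_neg k (u v : vec k) : - dot u v <= vnorm u * vnorm v.
Proof.
have := cs u (vscale (-1) v). rewrite dot_scal_r.
have -> : vnorm (vscale (-1) v) = vnorm v.
  by rewrite /vnorm dot_scal_r dot_scal_l; f_equal; ring.
lra.
Qed.

Lemma L0 n m (y : X n m) : Lfun y (xzero n m) = dot y.1 y.1 - dot y.2 y.2.
Proof.
rewrite /Lfun !vnorm_sq /dot /vsub /xzero /vzero /=.
congr (_ - _); apply: eq_bigr => i _; ring.
Qed.


Lemma dot_zero_l k (u : vec k) : dot (@vzero k) u = 0.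
Proof.
rewrite /dot /vzero. transitivity (\big[Rplus/0]_(i < k) (0 * u i)).
  apply: eq_bigr => i _; ring.
rewrite bsum_scal; ring.
Qed.
Lemma vnorm_zero k : vnorm (@vzero k) = 0.
Proof. by rewrite /vnorm dot_zero_l sqrt_0. Qed.

Lemma dot_sq_le k (a v : vec k) : (dot a v)^2 <= dot a a * dot v v.
Proof.
have h1 := cs a v. have h2 := cs_neg a v.
have h3 := vnorm_ge0 a. have h4 := vnorm_ge0 v.
rewrite -(vnorm_sq a) -(vnorm_sq v). nra.
Qed.

Lemma vnorm_scal_pos k c (v : vec k) : 0 <= c -> vnorm (vscale c v) = c * vnorm v.
Proof.
move=> Hc. rewrite /vnorm dot_scal_r dot_scal_l -Rmult_assoc sqrt_mult_alt.
  by rewrite sqrt_square.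
nra.
Qed.

Definition Mbound l k (A : mat l k) := \big[Rplus/0]_(i < l) dot (A i) (A i).

Lemma mapp_bound l k (A : mat l k) v :
  dot (mapp A v) (mapp A v) <= Mbound A * dot v v.
Proof.
rewrite {1}/dot /Mbound Rmult_comm -bsum_scal. apply: bsum_le => i.
have := dot_sq_le (A i) v. rewrite /mapp /=. change (\big[Rplus/0]_(j < k) (A i j * v j)) with (dot (A i) v).
nra.
Qed.

Lemma mapp_scal l k (A : mat l k) c v : mapp A (vscale c v) = vscale c (mapp A v).
Proof.
apply: functional_extensionality => i. rewrite /mapp /vscale -bsum_scal.
apply: eq_bigr => j _; ring.
Qed.

Lemma opnorm_spec l k (A : mat l k) :
  0 <= opnorm A /\ forall v, vnorm (mapp A v) <= opnorm A * vnorm v.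
Proof.
set S := fun y => exists v : vec k, vnorm v <= 1 /\ y = vnorm (mapp A v).
have hM : 0 <= Mbound A by apply: bsum_nonneg => i; apply: dot_nonneg.
have Hb : bound S.
  exists (sqrt (Mbound A)) => y [v [Hv ->]].
  rewrite /vnorm. rewrite -[sqrt (Mbound A)]Rmult_1_r.
  apply: Rle_trans (sqrt_le_1_alt _ _ (mapp_bound A v)) _.
  rewrite sqrt_mult_alt //. apply: Rmult_le_compat_l; first exact: sqrt_pos.
  exact: Hv.
have Hne : exists y, S y.
  by exists (vnorm (mapp A (@vzero k))), (@vzero k); rewrite vnorm_zero; split => //; lra.
have Hl : is_lub S (opnorm A).
  rewrite /opnorm. apply: epsilon_spec.
  have [y Hy] := completeness S Hb Hne. by exists y.
have H0 : 0 <= opnorm A.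
  apply: Rle_trans (vnorm_ge0 (mapp A (@vzero k))) _. apply: (proj1 Hl).
  by exists (@vzero k); rewrite vnorm_zero; split => //; lra.
split => // v.
have hv := vnorm_ge0 v.
destruct (Req_dec (vnorm v) 0) as [E|E].
  have : dot v v = 0 by rewrite -vnorm_sq E; ring.
  move=> Hd. have := mapp_bound A v. rewrite Hd Rmult_0_r => H1.
  have : dot (mapp A v) (mapp A v) = 0 by have := dot_nonneg (mapp A v); lra.
  move=> H2. rewrite E /vnorm H2 sqrt_0; lra.
have hp : 0 < vnorm v by lra.
have Hs : S (vnorm (mapp A (vscale (/ vnorm v) v))).
  exists (vscale (/ vnorm v) v); split => //.
  rewrite vnorm_scal_pos; last by left; apply: Rinv_0_lt_compat.
  rewrite Rinv_l //; lra.
have := proj1 Hl _ Hs. rewrite mapp_scal vnorm_scal_pos; last by left; apply: Rinv_0_lt_compat.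
move=> H1. apply/(Rmult_le_reg_l (/ vnorm v)); first by apply: Rinv_0_lt_compat.
have -> : / vnorm v * (opnorm A * vnorm v) = opnorm A by field.
exact: H1.
Qed.


Lemma strict_up (h : R -> R) a b : a <= b ->
  (forall t, a <= t <= b -> continuity_pt h t) ->
  (forall t, a <= t < b -> h a <= h t -> exists l, derivable_pt_lim h t l /\ 0 < l) ->
  h a <= h b.
Proof.
move=> Hab Hc Hd.
have [M [HM [HaM HMb]]] := continuity_ab_maj h a b Hab Hc.
have HaM' : h a <= h M by apply: HM; lra.
destruct (Req_dec M b) as [E|E]; first by rewrite -E.
have HMb' : M < b by lra.
have [l [Hl Hl0]] := Hd M (conj HaM HMb') HaM'.
have Hl2 : 0 < l / 2 by lra.
have [del Hdel] := Hl _ Hl2.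
set h0 := Rmin (del / 2) (b - M).
have hd := cond_pos del.
have h0p : 0 < h0 by apply: Rmin_pos; lra.
have h0le : h0 <= b - M by apply: Rmin_r.
have h0le2 : h0 <= del / 2 by apply: Rmin_l.
have := Hdel h0 ltac:(lra) ltac:(rewrite Rabs_right; lra).
move=> H1.
have H2 : h (M + h0) <= h M by apply: HM; lra.
have H3 : (h (M + h0) - h M) / h0 <= 0.
  have hi := Rinv_0_lt_compat h0 h0p. rewrite /Rdiv. nra.
have := Rabs_def2 _ _ H1. lra.
Qed.


Lemma dlim_eq f t l l' : derivable_pt_lim f t l -> l = l' -> derivable_pt_lim f t l'.
Proof. by move=> H <-. Qed.

Lemma dot_self_deriv k (F : R -> vec k) (F' : vec k) t :
  (forall i, derivable_pt_lim (fun s => F s i) t (F' i)) ->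
  derivable_pt_lim (fun s => dot (F s) (F s)) t (2 * dot (F t) F').
Proof.
move=> H.
have := @bsum_deriv _ (index_enum 'I_k) (fun i s => F s i * F s i)
   (fun i => F' i * F t i + F t i * F' i) t
   (fun i => derivable_pt_lim_mult (fun s => F s i) (fun s => F s i) t _ _ (H i) (H i)).
move=> H1. apply: dlim_eq; first exact: H1.
rewrite /dot -bsum_scal. apply: eq_bigr => i _; ring.
Qed.

Lemma L_scale n m c (y : X n m) : Lfun (xscale c y) (xzero n m) = c^2 * Lfun y (xzero n m).
Proof. rewrite !L0 /xscale. rewrite !dot_scal_l !dot_scal_r. simpl. ring. Qed.

Lemma dot_add_sq k (a b : vec k) : dot (vadd a b) (vadd a b) <= 2 * dot a a + 2 * dot b b.
Proof.
rewrite !dot_add_l !dot_add_r (dot_sym b a).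
have := cs a b. have := pow2_ge_0 (vnorm a - vnorm b). have := vnorm_sq a. have := vnorm_sq b. nra.
Qed.

Lemma dot_expand k (a0 d : vec k) :
  dot (vadd a0 d) (vadd a0 d) - dot a0 a0 = 2 * dot a0 d + dot d d.
Proof. rewrite !dot_add_l !dot_add_r (dot_sym d a0). ring. Qed.

Lemma dot_vsub_expand k (a a0 : vec k) :
  dot a a - dot a0 a0 = 2 * dot a0 (vsub a a0) + dot (vsub a a0) (vsub a a0).
Proof.
have E : vadd a0 (vsub a a0) = a.
  apply: functional_extensionality => i; rewrite /vadd /vsub; ring.
rewrite -dot_expand E //.
Qed.

Lemma L_pos_near n m (y0 : X n m) : 0 < Lfun y0 (xzero n m) ->
  exists e, 0 < e /\ forall y, xnorm (xsub y y0) < e -> 0 < Lfun y (xzero n m).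
Proof.
rewrite L0 => Hp.
set K := 2 * vnorm y0.1 + 2 * vnorm y0.2 + 1.
have hK : 1 <= K by have := vnorm_ge0 y0.1; have := vnorm_ge0 y0.2; rewrite /K; lra.
pose L := dot y0.1 y0.1 - dot y0.2 y0.2.
have HL : 0 < L by exact Hp.
exists (Rmin 1 (L / (2 * K))); split.
  apply: Rmin_pos; first lra. apply: Rdiv_lt_0_compat; lra.
move=> y Hy. rewrite L0.
have e1 := Rmin_l 1 (L / (2 * K)). have e2 := Rmin_r 1 (L / (2 * K)).
set d1 := vsub y.1 y0.1. set d2 := vsub y.2 y0.2.
have hd1 : vnorm d1 <= xnorm (xsub y y0).
  apply: sqrt_le_1_alt. have := dot_nonneg (xsub y y0).2. rewrite /xsub /=. rewrite /d1; lra.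
have hd2 : vnorm d2 <= xnorm (xsub y y0).
  apply: sqrt_le_1_alt. have := dot_nonneg (xsub y y0).1. rewrite /xsub /=. rewrite /d2; lra.
have E1 := dot_vsub_expand y.1 y0.1. have E2 := dot_vsub_expand y.2 y0.2.
fold d1 in E1. fold d2 in E2.
have c1 := cs_neg y0.1 d1. have c2 := cs y0.2 d2.
have q2 := vnorm_sq d2. have q1 := dot_nonneg d1.
have n1 := vnorm_ge0 d1. have n2 := vnorm_ge0 d2.
have m1 := vnorm_ge0 y0.1. have m2 := vnorm_ge0 y0.2.
set e := xnorm (xsub y y0) in hd1 hd2 Hy.
have he : e < L / (2 * K) by lra.
have he' : e * (2 * K) < L.
  apply/(Rmult_lt_reg_r (/ (2*K))). apply: Rinv_0_lt_compat; lra.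
  have -> : e * (2 * K) * / (2 * K) = e by field; lra. exact he.
have he1 : e < 1 by lra.
have : dot d2 d2 <= e by rewrite -q2; nra.
have : vnorm y0.1 * vnorm d1 <= vnorm y0.1 * e by nra.
have : vnorm y0.2 * vnorm d2 <= vnorm y0.2 * e by nra.
rewrite /K in he'. rewrite /L in he'. nra.
Qed.


Section Bounds.
Variables (n m : nat) (A : mat n n) (B : mat n m) (C : mat m n) (D : mat m m)
  (al el c1 : R) (p : vec n) (q : vec m).
Hypotheses (Hc1 : 0 < c1) (Hel : 0 <= el)
  (Hal : al >= el + opnorm B + opnorm C + c1)
  (HA : dot p (mapp A p) >= al * vnorm p ^ 2)
  (HD : dot q (mapp D q) <= el * vnorm q ^ 2).

Let bB : - dot p (mapp B q) <= vnorm p * (opnorm B * vnorm q).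
Proof.
have := cs_neg p (mapp B q). have [h0 h1] := opnorm_spec B.
have := h1 q. have := vnorm_ge0 p. nra.
Qed.
Let bC : dot q (mapp C p) <= vnorm q * (opnorm C * vnorm p).
Proof.
have := cs q (mapp C p). have [h0 h1] := opnorm_spec C.
have := h1 p. have := vnorm_ge0 q. nra.
Qed.

Lemma Lder_pos : 0 < dot p p - dot q q ->
  0 < 2 * (dot p (mapp A p) + dot p (mapp B q)) - 2 * (dot q (mapp C p) + dot q (mapp D q)).
Proof.
move=> H. rewrite -(vnorm_sq p) -(vnorm_sq q) in H.
have x0 := vnorm_ge0 p. have y0 := vnorm_ge0 q.
have b0 := proj1 (opnorm_spec B). have c0 := proj1 (opnorm_spec C).
have hxy : (vnorm q) < (vnorm p) by nra.
have hxy2 : (vnorm p) * (vnorm q) <= (vnorm p) * (vnorm p) by nra.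
have hyy : (vnorm q) * (vnorm q) <= (vnorm p) * (vnorm p) by nra.
have e1 : (opnorm B) * ((vnorm p) * (vnorm q)) <= (opnorm B) * ((vnorm p) * (vnorm p)) by apply: Rmult_le_compat_l.
have e2 : (opnorm C) * ((vnorm p) * (vnorm q)) <= (opnorm C) * ((vnorm p) * (vnorm p)) by apply: Rmult_le_compat_l.
have e3 : el * ((vnorm q) * (vnorm q)) <= el * ((vnorm p) * (vnorm p)) by apply: Rmult_le_compat_l.
have e4 : c1 * ((vnorm p) * (vnorm p)) > 0 by apply: Rmult_lt_0_compat; nra.
have e5 : (al - (el + opnorm B + opnorm C + c1)) * ((vnorm p) * (vnorm p)) >= 0.
  apply: Rle_ge; apply: Rmult_le_pos; nra.
have := bB. have := bC. nra.
Qed.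

Lemma Pder_lb : dot q q <= dot p p ->
  2 * (dot p (mapp A p) + dot p (mapp B q)) >= 2 * (el + opnorm C + c1) * dot p p.
Proof.
move=> H. rewrite -(vnorm_sq p) -(vnorm_sq q) in H. rewrite -(vnorm_sq p).
have x0 := vnorm_ge0 p. have y0 := vnorm_ge0 q.
have b0 := proj1 (opnorm_spec B).
have hxy : (vnorm q) <= (vnorm p) by nra.
have hxy2 : (vnorm p) * (vnorm q) <= (vnorm p) * (vnorm p) by nra.
have e1 : (opnorm B) * ((vnorm p) * (vnorm q)) <= (opnorm B) * ((vnorm p) * (vnorm p)) by apply: Rmult_le_compat_l.
have e5 : (al - (el + opnorm B + opnorm C + c1)) * ((vnorm p) * (vnorm p)) >= 0.
  apply: Rle_ge; apply: Rmult_le_pos; nra.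
have := bB. nra.
Qed.

Lemma Zder_ub : dot p p <= dot q q ->
  2 * (dot q (mapp C p) + dot q (mapp D q)) <= 2 * (el + opnorm C) * dot q q.
Proof.
move=> H. rewrite -(vnorm_sq p) -(vnorm_sq q) in H. rewrite -(vnorm_sq q).
have x0 := vnorm_ge0 p. have y0 := vnorm_ge0 q.
have c0 := proj1 (opnorm_spec C).
have hxy : (vnorm p) <= (vnorm q) by nra.
have hxy2 : (vnorm q) * (vnorm p) <= (vnorm q) * (vnorm q) by nra.
have e2 : (opnorm C) * ((vnorm q) * (vnorm p)) <= (opnorm C) * ((vnorm q) * (vnorm q)) by apply: Rmult_le_compat_l.
have := bC. nra.
Qed.
End Bounds.

Lemma final_ineq a1 E c1 Pw du dv qu qv G R0 :
  0 < c1 -> 0 <= E -> 0 < R0 ->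
  a1 >= 2 * (E + c1) * Pw -> 2 * du <= 2 * E * qu -> 2 * dv <= 2 * E * qv ->
  2 * (qu + qv) * G <= Pw -> R0 <= G -> 0 < 2 * (qu + qv) ->
  0 < a1 - (2 * (2 * du + 2 * dv) * G + 2 * (qu + qv) * (R0 * c1)).
Proof.
move=> hc hE hR h1 h2 h3 h4 h5 h6.
set Zr := 2 * (qu + qv) in h4 h6 *.
have hG : 0 < G by lra.
have e1 : 2 * (2 * du + 2 * dv) * G <= 2 * E * Zr * G.
  rewrite /Zr. apply: Rmult_le_compat_r; lra.
have e2 : 2 * (E + c1) * (Zr * G) <= 2 * (E + c1) * Pw.
  apply: Rmult_le_compat_l; lra.
have e3 : c1 * Zr * R0 <= c1 * Zr * G.
  apply: Rmult_le_compat_l; first nra. lra.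
have e4 : 0 < c1 * Zr * R0 by apply: Rmult_lt_0_compat; first nra. 
nra.
Qed.

Unset Implicit Arguments.

Theorem lemma2p7 (n m : nat) (U Gamma : X n m -> Prop)
  (f : vec n -> vec m -> vec n) (g : vec n -> vec m -> vec m)
  (Daf : X n m -> mat n n) (Dzf : X n m -> mat n m)
  (Dag : X n m -> mat m n) (Dzg : X n m -> mat m m)
  (alpha ell : X n m -> R) (c1 : R)
  (Phi : R -> X n m -> X n m) (Q : R -> X n m -> X n m -> X n m) :
  Hyp1 U ->
  Hyp2 U f g Daf Dzf Dag Dzg alpha ell c1 ->
  Hyp3 U Gamma f g Phi ->
  is_fundamental_matrix Gamma Daf Dzf Dag Dzg Phi Q ->
  forall x, Gamma x -> is_subspace (Tset Q x).
Proof.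
move=> H1 H2 H3 HF x Gx.
case: H2 => _ [_ [_ [Hc1 [Hpos [HA [HD Hal]]]]]].
case: H3 => GU [_ [Ginv _]].
have [Hlin [HQ0 HQd]] := HF x Gx.
have Hy : forall s, 0 <= s -> U (Phi s x) by move=> s Hs; apply: GU; apply: Ginv.
have TL : forall v, Tset Q x v -> forall s, 0 <= s ->
    dot (Q s x v).1 (Q s x v).1 <= dot (Q s x v).2 (Q s x v).2.
  move=> v Tv s Hs. have := Tv s Hs. rewrite L0. lra.
have dP : forall v s, 0 < s -> derivable_pt_lim (fun r => dot (Q r x v).1 (Q r x v).1) s
   (2 * (dot (Q s x v).1 (mapp (Daf (Phi s x)) (Q s x v).1) +
         dot (Q s x v).1 (mapp (Dzf (Phi s x)) (Q s x v).2))).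
  move=> v s Hs. have [Hd1 _] := (proj2 (HQd v)) s Hs.
  apply: dlim_eq; first exact: (@dot_self_deriv _ (fun r => (Q r x v).1) _ s Hd1).
  by rewrite /DFapp /= dot_add_r.
have dZ : forall v s, 0 < s -> derivable_pt_lim (fun r => dot (Q r x v).2 (Q r x v).2) s
   (2 * (dot (Q s x v).2 (mapp (Dag (Phi s x)) (Q s x v).1) +
         dot (Q s x v).2 (mapp (Dzg (Phi s x)) (Q s x v).2))).
  move=> v s Hs. have [_ Hd2] := (proj2 (HQd v)) s Hs.
  apply: dlim_eq; first exact: (@dot_self_deriv _ (fun r => (Q r x v).2) _ s Hd2).
  by rewrite /DFapp /= dot_add_r.
split; [|split].
- move=> t Ht.
  have E : xzero n m = xscale 0 (xzero n m).
    rewrite /xscale /xzero /vscale /vzero /=. f_equal; apply: functional_extensionality => i; ring.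
  rewrite {1}E (proj2 (Hlin t Ht) 0 (xzero n m)) L_scale. rewrite pow_i; last lia. lra.
- move=> u v Tu Tv t1 Ht1.
  set w := xadd u v.
  have Ew : forall s, 0 <= s -> (Q s x w).1 = vadd (Q s x u).1 (Q s x v).1.
    by move=> s Hs; rewrite /w (proj1 (Hlin s Hs)).
  apply: Rnot_lt_le => Hlt.
  pose h := fun s => dot (Q s x w).1 (Q s x w).1 - dot (Q s x w).2 (Q s x w).2.
  have hL : forall s, Lfun (Q s x w) (xzero n m) = h s by move=> s; rewrite L0.
  have [t0 [Ht0 Hh0]] : exists t0, 0 < t0 /\ 0 < h t0.
    case: (Rle_lt_or_eq_dec 0 t1 Ht1) => [Hp|E].
      by exists t1; split => //; rewrite -hL.
    rewrite -E HQ0 in Hlt.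
    have [e [He Hne]] := L_pos_near Hlt.
    have [del [Hdel Hd]] := (proj1 (HQd w)) e He.
    exists (del/2); split; first lra. rewrite -hL. apply: Hne. apply: Hd. lra.
  have dh : forall s, 0 < s -> derivable_pt_lim h s
     (2 * (dot (Q s x w).1 (mapp (Daf (Phi s x)) (Q s x w).1) +
           dot (Q s x w).1 (mapp (Dzf (Phi s x)) (Q s x w).2)) -
      2 * (dot (Q s x w).2 (mapp (Dag (Phi s x)) (Q s x w).1) +
           dot (Q s x w).2 (mapp (Dzg (Phi s x)) (Q s x w).2))).
    move=> s Hs. exact: (derivable_pt_lim_minus _ _ _ _ _ (dP w s Hs) (dZ w s Hs)).
  have hcont : forall s, 0 < s -> continuity_pt h s.
    move=> s Hs. apply: derivable_continuous_pt. econstructor. exact: (dh s Hs).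
  have Hinv : forall s, t0 <= s -> h t0 <= h s.
    move=> s Hs. apply: strict_up => //.
      move=> r Hr; apply: hcont; lra.
    move=> r Hr Hhr. have Ur := Hy r ltac:(lra). have [_ Hel] := Hpos _ Ur.
    eexists; split; first exact: (dh r ltac:(lra)).
    apply: (Lder_pos _ _ Hc1 Hel (Hal _ Ur) (HA _ Ur _) (HD _ Ur _)).
    rewrite /h in Hhr Hh0. lra.
  pose P := fun s => dot (Q s x w).1 (Q s x w).1.
  pose Z := fun s => 2 * (dot (Q s x u).2 (Q s x u).2 + dot (Q s x v).2 (Q s x v).2).
  have PleZ : forall s, 0 <= s -> P s <= Z s.
    move=> s Hs. rewrite /P (Ew s Hs).
    have := dot_add_sq (Q s x u).1 (Q s x v).1.
    have := TL u Tu s Hs. have := TL v Tv s Hs. rewrite /Z. lra.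
  have hP : forall s, h s <= P s.
    move=> s. have := dot_nonneg (Q s x w).2. rewrite /h /P. lra.
  have Zpos : forall s, t0 <= s -> 0 < Z s.
    move=> s Hs. have := Hinv s Hs. have := hP s. have := PleZ s ltac:(lra). lra.
  have Pt0 : 0 < P t0 by have := hP t0; lra.
  have Zt0 := Zpos t0 (Rle_refl _).
  pose R0 := P t0 / Z t0.
  have R0p : 0 < R0 by apply: Rdiv_lt_0_compat.
  pose gg := fun s => R0 * (1 + c1 * (s - t0)).
  pose K := fun s => P s - Z s * gg s.
  have dg : forall s, derivable_pt_lim gg s (R0 * c1).
    move=> s. apply: dlim_eq.
      apply: derivable_pt_lim_scal. apply: derivable_pt_lim_plus.
        apply: derivable_pt_lim_const.
      apply: derivable_pt_lim_scal. apply: derivable_pt_lim_minus.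
        apply: derivable_pt_lim_id.
      apply: derivable_pt_lim_const.
    ring.
  have dZs : forall s, 0 < s -> derivable_pt_lim Z s
     (2 * (2 * (dot (Q s x u).2 (mapp (Dag (Phi s x)) (Q s x u).1) +
           dot (Q s x u).2 (mapp (Dzg (Phi s x)) (Q s x u).2)) +
           2 * (dot (Q s x v).2 (mapp (Dag (Phi s x)) (Q s x v).1) +
           dot (Q s x v).2 (mapp (Dzg (Phi s x)) (Q s x v).2)))).
    move=> s Hs. apply: derivable_pt_lim_scal. apply: derivable_pt_lim_plus.
      exact: dZ. exact: dZ.
  have dK : forall s, 0 < s -> derivable_pt_lim K s _ :=
    fun s Hs => derivable_pt_lim_minus _ _ _ _ _ (dP w s Hs)
       (derivable_pt_lim_mult _ _ _ _ _ (dZs s Hs) (dg s)).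
  have Kt0 : K t0 = 0.
    rewrite /K /gg /R0. field_simplify; [lra | lra].
  have HK : forall s, t0 <= s -> K t0 <= K s.
    move=> s Hs. apply: strict_up => //.
      move=> r Hr. apply: derivable_continuous_pt. econstructor. exact: (dK r ltac:(lra)).
    move=> r Hr HKr. have Ur := Hy r ltac:(lra). have [_ Hel] := Hpos _ Ur.
    eexists; split; first exact: (dK r ltac:(lra)).
    have hr := Hinv r ltac:(lra).
    have hq : dot (Q r x w).2 (Q r x w).2 <= dot (Q r x w).1 (Q r x w).1.
      rewrite /h in hr Hh0. lra.
    have Pb := Pder_lb (Dzf (Phi r x)) (Dag (Phi r x)) (Hal _ Ur) (HA _ Ur _) hq.
    have Zu := Zder_ub (Dag (Phi r x)) (HD _ Ur _) (TL u Tu r ltac:(lra)).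
    have Zv := Zder_ub (Dag (Phi r x)) (HD _ Ur _) (TL v Tv r ltac:(lra)).
    have c0 := proj1 (opnorm_spec (Dag (Phi r x))).
    have ggr : R0 <= gg r.
      rewrite /gg. have : 0 <= c1 * (r - t0) by apply: Rmult_le_pos; lra. nra.
    have Zr := Zpos r ltac:(lra).
    have PZ : Z r * gg r <= P r by rewrite Kt0 /K in HKr; lra.
    move: Pb Zu Zv PZ ggr Zr. rewrite /P /Z.
    set E := ell (Phi r x) + opnorm (Dag (Phi r x)).
    move=> Pb Zu Zv PZ ggr Zr.
    apply: (final_ineq Hc1 _ R0p Pb Zu Zv PZ ggr Zr). rewrite /E.
    have := proj1 (opnorm_spec (Dag (Phi r x))). lra.
  pose s := t0 + / (R0 * c1).
  have Hs : t0 <= s.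
    rewrite /s. have : 0 < / (R0 * c1) by apply: Rinv_0_lt_compat; nra. lra.
  have := HK s Hs. rewrite Kt0 /K => HKs.
  have Zs := Zpos s Hs. have := PleZ s ltac:(lra).
  have Egg : gg s = R0 + 1 by rewrite /gg /s; field; lra.
  rewrite Egg in HKs. nra.
- move=> c u Tu t Ht. rewrite (proj2 (Hlin t Ht)) L_scale.
  have := Tu t Ht. have := pow2_ge_0 c. nra.
Qed.
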